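(* Let $n\ge3$, $q\in\{1,\dots,n-1\}$ and $k=\gcd(n,q)$. For $r\in\{1,\dots,n-1\}$ and $x,y\in\mathbb R^n$ define the biquadratic form $$B_{\Phi^{(n,r)}}(x;y)=(n-2)\sum_{i=1}^n x_i^2y_i^2+\sum_{i=1}^n x_{\sigma_r(i)}^2y_i^2-2\sum_{1\le i<j\le n}x_iy_ix_jy_j,$$ regarded as an element of $\mathcal P_{2n,4}$. Then $B_{\Phi^{(n,q)}}$ is extremal in $\mathcal P_{2n,4}$ if and only if $B_{\Phi^{(n,k)}}$ is extremal in $\mathcal P_{2n,4}$.
   Context: $\sigma_r(i)\equiv i+r\pmod n$ with values in $\{1,\dots,n\}$. $\mathcal P_{m,d}$ is the convex cone of positive semidefinite real forms in $m$ variables of degree $d$; these forms $B_{\Phi^{(n,r)}}$ are positive semidefinite. A form $F\in\mathcal P_{m,d}$ is extremal if $F=F_1+F_2$ with $F_i\in\mathcal P_{m,d}$ implies $F_i=\lambda_iF$ with $\lambda_i\ge0$. *)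

(* Defs.v *)
From HB Require Import structures.
From mathcomp Require Import all_boot all_order all_algebra.
From mathcomp Require Import Rstruct.
From mathcomp Require Import mpoly.
From Stdlib Require Import Rdefinitions.
Set Implicit Arguments. Unset Strict Implicit. Unset Printing Implicit Defensive.
Import Order.TTheory GRing.Theory Num.Theory.
Local Open Scope ring_scope.

Definition psd_form (m d : nat) (F : {mpoly R[m]}) : Prop :=
  F \is d.-homog /\ forall v : 'I_m -> R, 0 <= F.@[v].

Definition extremal (m d : nat) (F : {mpoly R[m]}) : Prop :=
  psd_form d F /\
  forall F1 F2 : {mpoly R[m]}, psd_form d F1 -> psd_form d F2 -> F = F1 + F2 ->
    exists l1 l2 : R, [/\ 0 <= l1, 0 <= l2, F1 = l1 *: F & F2 = l2 *: F].

(* variables: x_i = X_(i) and y_i = X_(n+i), indices 0-based *)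
Definition xv (n : nat) (i : 'I_n) : {mpoly R[n + n]} := 'X_(lshift n i).
Definition yv (n : nat) (i : 'I_n) : {mpoly R[n + n]} := 'X_(rshift n i).

Lemma ord_pos (n : nat) (i : 'I_n) : leq 1 n.
Proof. by case: n i => [[]|]. Qed.

(* sigma_r(i) = i + r mod n (0-based version of the paper's 1-based one) *)
Definition sigma (n r : nat) (i : 'I_n) : 'I_n :=
  Ordinal (ltn_pmod (i + r) (ord_pos i)).

Definition Bform (n r : nat) : {mpoly R[n + n]} :=
  (n - 2)%:R * (\sum_(i < n) xv i ^+ 2 * yv i ^+ 2)
  + (\sum_(i < n) xv (sigma r i) ^+ 2 * yv i ^+ 2)
  - 2%:R * (\sum_(i < n) \sum_(j < n | ltn i j) xv i * yv i * xv j * yv j).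

(* Main.v *)
Require Import Defs.
From HB Require Import structures.
From mathcomp Require Import all_boot all_order all_algebra.
From mathcomp Require Import Rstruct.
From mathcomp Require Import fingroup perm mpoly.
From Stdlib Require Import Rdefinitions FunctionalExtensionality.
Set Implicit Arguments. Unset Strict Implicit. Unset Printing Implicit Defensive.
Import Order.TTheory GRing.Theory Num.Theory.
Local Open Scope ring_scope.



Local Open Scope nat_scope.
Definition fpi (n k q i : nat) := (i %% k + (i %/ k) * q) %% n.

Lemma fpi_mod n k q i : fpi n k q i %% n = fpi n k q i.
Proof. exact: modn_mod. Qed.

Lemma fpi_shift n k q i : 0 < k -> k %| n -> k %| q -> 0 < n ->
  fpi n k q ((i + k) %% n) = (fpi n k q i + q) %% n.
Proof.
move=> k0 kn kq n0; rewrite /fpi.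
set j := (i + k) %% n.
have jr : j %% k = i %% k by rewrite /j modn_dvdm // modnDr.
rewrite jr modnDml -addnA.
apply/eqP; rewrite eqn_modDl; apply/eqP.
have e1 : k * (j %/ k) = k * (i %/ k).+1 %[mod n].
  apply/eqP; rewrite -(eqn_modDr (i %% k)).
  rewrite [k * (j %/ k)]mulnC -{1}jr -divn_eq mulnSr -addnA (addnC k) addnA.
  by rewrite [k * _]mulnC -divn_eq /j modn_mod.
have -> : q = k * (q %/ k) by rewrite mulnC divnK.
rewrite mulnA (mulnC (j %/ k)) -modnMml e1 modnMml.
by congr (_ %% n); rewrite mulnSr mulnDl mulnA (mulnC k).
Qed.

Lemma coprime_divgcd n q : 0 < n -> coprime (n %/ gcdn n q) (q %/ gcdn n q).
Proof.
move=> n0; have g0 : 0 < gcdn n q by rewrite gcdn_gt0 n0.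
rewrite /coprime; apply/eqP.
have : gcdn (n %/ gcdn n q) (q %/ gcdn n q) * gcdn n q = 1 * gcdn n q.
  by rewrite muln_gcdl !divnK ?dvdn_gcdl ?dvdn_gcdr // mul1n.
by move/eqP; rewrite eqn_pmul2r // => /eqP.
Qed.

Lemma fpi_inj n q i i' : 0 < n -> i < n -> i' < n ->
  fpi n (gcdn n q) q i = fpi n (gcdn n q) q i' -> i = i'.
Proof.
move=> n0 ilt i'lt; set k := gcdn n q.
have k0 : 0 < k by rewrite gcdn_gt0 n0.
have kn : k %| n by exact: dvdn_gcdl.
have kq : k %| q by exact: dvdn_gcdr.
have cop := @coprime_divgcd n q n0; rewrite -/k in cop.
have qe : q = q %/ k * k by rewrite divnK.
have ne : n = n %/ k * k by rewrite divnK.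
rewrite /fpi => E.
have Ek := congr1 (fun x => x %% k) E; rewrite /= !modn_dvdm // in Ek.
rewrite qe !mulnA !(addnC (_ %% k)) !modnMDl !modn_mod in Ek.
move: E; rewrite Ek => /eqP; rewrite eqn_modDl => E.
have Bn : forall x, x < n -> x %/ k < n %/ k by move=> x xn; rewrite ltn_divLR // -ne.
have B1 := Bn _ ilt; have B2 := Bn _ i'lt.
suff : i %/ k = i' %/ k by move=> eB; rewrite (divn_eq i k) (divn_eq i' k) eB Ek.
wlog hle : i i' Ek E ilt i'lt B1 B2 / i' %/ k <= i %/ k.
  move=> H; case: (leqP (i' %/ k) (i %/ k)) => h; first exact: H.
  apply/esym/H => //; [by rewrite eq_sym | by apply: ltnW].
move: E; rewrite eqn_mod_dvd; last by rewrite leq_mul2r hle orbT.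
rewrite -mulnBl {1}ne qe mulnA dvdn_pmul2r // Gauss_dvdl //.
move=> d; apply/eqP; rewrite eqn_leq hle andbT -subn_eq0.
rewrite eqn0Ngt; apply/negP => ne0.
have := dvdn_leq ne0 d.
by rewrite leqNgt (leq_ltn_trans (leq_subr _ _) B1).
Qed.
Local Open Scope ring_scope.
Section Sym.
Variable m : nat.
Implicit Types (p F : {mpoly R[m]}) (s : 'S_m).

Lemma msym_X s i : msym s ('X_i : {mpoly R[m]}) = 'X_(s i).
Proof. by rewrite /msym mmapX mmap1U. Qed.

Lemma meval_msym s p v : (msym s p).@[v] = p.@[fun i => v (s i)].
Proof.
have -> : msym s p = p \mPo [tuple 'X_(s i) | i < m].
  rewrite /msym /comp_mpoly; congr mmap.
  by apply: functional_extensionality => i; rewrite tnth_mktuple.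
rewrite comp_mpoly_meval; congr meval.
by apply: functional_extensionality => i; rewrite tnth_mktuple mevalXU.
Qed.

Lemma homog_msym d s p : p \is d.-homog -> msym s p \is d.-homog.
Proof.
move/dhomogP=> H; apply/dhomogP => mm.
rewrite mcoeff_msupp mcoeff_sym -mcoeff_msupp => /H.
by move=> <-; rewrite /= mdeg_mperm.
Qed.

Lemma psd_msym d s p : psd_form d p -> psd_form d (msym s p).
Proof.
case=> h pp; split; first exact: homog_msym.
by move=> v; rewrite meval_msym.
Qed.

Lemma msymK s p : msym s^-1 (msym s p) = p.
Proof. by rewrite -msymMm mulgV msym1m. Qed.

Lemma msymKV s p : msym s (msym s^-1 p) = p.
Proof. by rewrite -msymMm mulVg msym1m. Qed.

Lemma extremal_msym d s F : extremal d F -> extremal d (msym s F).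
Proof.
case=> pF ext; split; first exact: psd_msym.
move=> F1 F2 p1 p2 e.
have e' : F = msym s^-1 F1 + msym s^-1 F2 by rewrite -msymD -e msymK.
have [l1 [l2 [h1 h2 E1 E2]]] := ext _ _ (psd_msym s^-1 p1) (psd_msym s^-1 p2) e'.
exists l1, l2; split => //.
  by rewrite -(msymKV s F1) E1 msymZ.
by rewrite -(msymKV s F2) E2 msymZ.
Qed.
End Sym.

Section Pairs.
Variable (m n : nat).
Local Notation P := {mpoly R[m]}.

Lemma pairs (b c : 'I_n -> P) :
  2%:R * (\sum_(i < n) \sum_(j < n | ltn i j) b i * c i * b j * c j)
  = (\sum_(i < n) b i * c i) ^+ 2 - \sum_(i < n) (b i * c i) ^+ 2.
Proof.
set a := fun i => b i * c i.
have -> : \sum_(i < n) \sum_(j < n | ltn i j) b i * c i * b j * c j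
        = \sum_(i < n) \sum_(j < n | ltn i j) a i * a j.
  by apply: eq_bigr => i _; apply: eq_bigr => j _; rewrite /a mulrA.
have sq : (\sum_(i < n) a i) ^+ 2 = \sum_(i < n) \sum_(j < n) a i * a j.
  by rewrite expr2 mulr_suml; apply: eq_bigr => i _; rewrite mulr_sumr.
have split1 : forall i : 'I_n, \sum_(j < n) a i * a j =
   \sum_(j < n | ltn i j) a i * a j + a i ^+ 2 + \sum_(j < n | ltn j i) a i * a j.
  move=> i; rewrite (bigID (fun j : 'I_n => ltn i j)) /= -addrA; congr (_ + _).
  rewrite (bigD1 i) /= ?ltnn // expr2; congr (_ + _).
  apply: eq_bigl => j; case: ltngtP => //= h.
    by apply/eqP => /(congr1 val) /= e; move: h; rewrite e ltnn.
  by apply/eqP/val_inj.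
have sw : \sum_(i < n) \sum_(j < n | ltn j i) a i * a j
        = \sum_(i < n) \sum_(j < n | ltn i j) a i * a j.
  rewrite (eq_bigr (fun i : 'I_n => \sum_(j < n) (if ltn j i then a i * a j else 0)));
    last by move=> i _; rewrite big_mkcond.
  rewrite exchange_big /=; apply: eq_bigr => i _; rewrite [RHS]big_mkcond /=.
  by apply: eq_bigr => j _; case: ifP => // _; rewrite mulrC.
have sq2 : (\sum_(i < n) a i) ^+ 2 = \sum_(i < n) (\sum_(j < n | ltn i j) a i * a j
   + a i ^+ 2 + \sum_(j < n | ltn j i) a i * a j).
  by rewrite sq; apply: eq_bigr => i _; exact: split1.
rewrite sq2 !big_split /= sw.
rewrite mulr_natl mulr2n; set X := \sum_(i < n) _; set Y := \sum_(i < n) _.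
by rewrite addrAC addrK.
Qed.
End Pairs.

Section Lift.
Variable n : nat.
Variable pi : 'S_n.

Definition liftf (i : 'I_(n + n)) : 'I_(n + n) :=
  unsplit (match split i with inl a => inl (pi a) | inr b => inr (pi b) end).

Lemma liftf_inj : injective liftf.
Proof.
move=> i j; rewrite /liftf => /(can_inj (@unsplitK n n)) e.
apply: (can_inj (@splitK n n)).
by case: (split i) e; case: (split j) => // a b [] /perm_inj ->.
Qed.

Definition liftS : 'S_(n + n) := perm liftf_inj.

Lemma msym_xv i : msym liftS (xv i) = xv (pi i).
Proof.
rewrite /xv msym_X permE /liftf.
by rewrite (unsplitK (inl i : 'I_n + 'I_n)).
Qed.

Lemma msym_yv i : msym liftS (yv i) = yv (pi i).
Proof.
rewrite /yv msym_X permE /liftf.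
by rewrite (unsplitK (inr i : 'I_n + 'I_n)).
Qed.

Lemma sum_pi (f : 'I_n -> {mpoly R[n + n]}) :
  \sum_(i < n) f (pi i) = \sum_(i < n) f i.
Proof. by rewrite [RHS](reindex_inj (@perm_inj _ pi)). Qed.

Lemma Bform_msym k q : (forall i, pi (sigma k i) = sigma q (pi i)) ->
  msym liftS (Bform n k) = Bform n q.
Proof.
move=> hpi; rewrite /Bform rmorphB rmorphD !rmorphM !rmorph_nat !rmorph_sum.
congr (_ * _ + _ - _).
- rewrite -[RHS]sum_pi; apply: eq_bigr => i _.
  by rewrite rmorphM !rmorphXn /= msym_xv msym_yv.
- rewrite -[RHS]sum_pi; apply: eq_bigr => i _.
  by rewrite rmorphM !rmorphXn /= msym_xv msym_yv hpi.
have -> : \sum_(i < n) msym liftS (\sum_(j < n | ltn i j) xv i * yv i * xv j * yv j)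
  = \sum_(i < n) \sum_(j < n | ltn i j) xv (pi i) * yv (pi i) * xv (pi j) * yv (pi j).
  apply: eq_bigr => i _; rewrite rmorph_sum; apply: eq_bigr => j _.
  by rewrite !rmorphM /= !msym_xv !msym_yv.
rewrite (pairs (fun i => xv (pi i)) (fun i => yv (pi i))) pairs.
by rewrite (sum_pi (fun i => xv i * yv i)) (sum_pi (fun i => (xv i * yv i) ^+ 2)).
Qed.
End Lift.

Theorem proposition4 (n q : nat) :
  leq 3 n -> leq 1 q -> leq q (n - 1) ->
  (extremal 4 (Bform n q) <-> extremal 4 (Bform n (gcdn n q))).
Proof.
move=> n3 q1 qn.
have n0 : leq 1 n by apply: leq_trans n3.
have k0 : leq 1 (gcdn n q) by rewrite gcdn_gt0 n0.
have kn : dvdn (gcdn n q) n by exact: dvdn_gcdl.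
have kq : dvdn (gcdn n q) q by exact: dvdn_gcdr.
pose f (i : 'I_n) : 'I_n := Ordinal (ltn_pmod (fpi n (gcdn n q) q i) n0).
have finj : injective f.
  move=> i j /(congr1 val) /= e; apply: val_inj.
  move: e; rewrite /f /= (fpi_mod n _ q i) (fpi_mod n _ q j) => e. exact: (fpi_inj n0 (ltn_ord i) (ltn_ord j) e).
pose pi := perm finj.
have hpi : forall i, pi (sigma (gcdn n q) i) = sigma q (pi i).
  by move=> i; apply: val_inj; rewrite !permE /= (fpi_mod n _ q (sigma _ i)) (fpi_mod n _ q i) fpi_shift.
have E := Bform_msym hpi.
split => h.
- have h2 := extremal_msym (liftS pi)^-1 h.
  rewrite -[in X in extremal _ X]E in h2.
  by rewrite msymK in h2.
- rewrite -E. exact: extremal_msym.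
Qed.
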